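(* Let $G=(U\cup W,E)$ be a finite bipartite graph with bipartition $(U,W)$ and let $\mathbf{I}^Y\in\{0,1\}^{\vec E}$ be defined by $I^Y_{\vec e}=1$ iff $\lim_{z\to\infty}Y_{\vec e}(z)=\infty$. Then the set $V(\mathbf{I}^Y)$ is a minimum vertex cover of $G$.
   Context: $\vec E$ denotes the directed edges, $\partial v$ the neighbours of $v$, empty sums are $0$. LABP: $m^0_{\vec e}(z)=0$, $m^{t+1}_{u\to v}(z)=z/(1+\sum_{w\in\partial u\setminus v}m^t_{w\to u}(z))$; $Y_{\vec e}(z)=\lim_t m^t_{\vec e}(z)$, which is non-decreasing in $z$. The map $\mathcal{P}_G:\{0,1\}^{\vec E}\to\{0,1\}^{\vec E}$ is $\mathcal{P}_G(\mathbf{I})_{u\to v}=\mathbf{1}(\sum_{w\in\partial u\setminus v}I_{w\to u}=0)$. For $\mathbf{I}\in\{0,1\}^{\vec E}$, the vertex set $V(\mathbf{I})$ is defined by: for $u\in U$, $u\in V(\mathbf{I})$ iff $\sum_{v\in\partial u}I_{v\to u}\ge1$; for $w\in W$, $w\in V(\mathbf{I})$ iff $\sum_{v\in\partial w}\mathcal{P}_G(\mathbf{I})_{v\to w}\ge2$. *)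

(* Defs.v *)
From mathcomp Require Import all_boot.
From Stdlib Require Import Reals.

Set Implicit Arguments.
Unset Strict Implicit.
Unset Printing Implicit Defensive.

(* A finite graph on vertex type T is given by a symmetric relation adj;
   directed edges are the pairs (u,v) with adj u v.  Messages are
   represented as functions T -> T -> R (only values on directed edges
   matter). *)

(* LABP iteration: labp adj z t u v = m^t_{u->v}(z),
   m^0 = 0,  m^{t+1}_{u->v}(z) = z / (1 + sum_{w in du \ v} m^t_{w->u}(z)). *)
Fixpoint labp (T : finType) (adj : rel T) (z : R) (t : nat) (u v : T) : R :=
  match t with
  | O => 0%R
  | S t' =>
      (z / (1 + \big[Rplus/0%R]_(w : T | adj w u && (w != v)) labp adj z t' w u))%R
  end.

Definition tends_to_infty (f : R -> R) : Prop :=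
  forall M : R, exists z0 : R, forall z : R, (z0 <= z)%R -> (M <= f z)%R.

Definition PG (T : finType) (adj : rel T) (I : T -> T -> bool) (u v : T) : bool :=
  (\sum_(w : T | adj w u && (w != v)) (I w u : nat) == 0)%N.

(* The vertex set V(I); inU is the indicator of the side U, W = its complement. *)
Definition Vset (T : finType) (adj : rel T) (inU : pred T) (I : T -> T -> bool)
  : {set T} :=
  [set x : T | if inU x
               then (1 <= \sum_(v : T | adj v x) (I v x : nat))%N
               else (2 <= \sum_(v : T | adj v x) (PG adj I v x : nat))%N].

Definition vertex_cover (T : finType) (adj : rel T) (C : {set T}) : Prop :=
  forall x y : T, adj x y -> (x \in C) || (y \in C).

Definition min_vertex_cover (T : finType) (adj : rel T) (C : {set T}) : Prop :=
  vertex_cover adj C /\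
  (forall C' : {set T}, vertex_cover adj C' -> (#|C| <= #|C'|)%N).

(* Main.v *)
From HB Require Import structures.
Require Import Defs.
From mathcomp Require Import all_boot.
From Stdlib Require Import Reals.
From Stdlib Require Import Lra Lia Classical.
HB.instance Definition _ := Monoid.isComLaw.Build R 0%R Rplus
  (fun a b c => esym (Rplus_assoc a b c)) Rplus_comm Rplus_0_l.

Open Scope R_scope.

Lemma sum_ge0 (I : Type) (r : seq I) (P : pred I) (f : I -> R) :
  (forall x, P x -> 0 <= f x) -> 0 <= \big[Rplus/0]_(x <- r | P x) f x.
Proof.
move=> H; apply: (big_ind (fun s => 0 <= s)) => //; [lra | move=> a b Ha Hb; lra].
Qed.

Lemma sum_le (I : Type) (r : seq I) (P : pred I) (f g : I -> R) :
  (forall x, P x -> f x <= g x) ->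
  \big[Rplus/0]_(x <- r | P x) f x <= \big[Rplus/0]_(x <- r | P x) g x.
Proof.
move=> H; apply: (big_ind2 (fun s t => s <= t)) => //; [lra | move=> a b c d ? ?; lra].
Qed.

Lemma sum_bound (I : Type) (r : seq I) (P : pred I) (f : I -> R) (c : R) :
  (forall x, P x -> f x <= c) -> 0 <= c ->
  \big[Rplus/0]_(x <- r | P x) f x <= INR (size r) * c.
Proof.
move=> H Hc; elim: r => [|a r IH]; first by rewrite big_nil /=; lra.
rewrite big_cons; change (size (a :: r)) with (size r).+1; rewrite S_INR; case: ifP => Pa.
  have := H a Pa; lra.
lra.
Qed.

Lemma sum_mulr (I : Type) (r : seq I) (P : pred I) (f : I -> R) (c : R) :
  \big[Rplus/0]_(x <- r | P x) (f x * c) = (\big[Rplus/0]_(x <- r | P x) f x) * c.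
Proof.
elim: r => [|a r IH]; first by rewrite !big_nil; ring.
rewrite !big_cons; case: ifP => _; rewrite IH //; ring.
Qed.

Lemma sum_cv (I : Type) (r : seq I) (P : pred I) (f : nat -> I -> R) (g : I -> R) :
  (forall x, P x -> Un_cv (fun t => f t x) (g x)) ->
  Un_cv (fun t => \big[Rplus/0]_(x <- r | P x) f t x) (\big[Rplus/0]_(x <- r | P x) g x).
Proof.
move=> H; elim: r => [|a r IH].
  rewrite big_nil; move=> e He; exists 0%nat => n _; rewrite big_nil /R_dist.
  rewrite Rminus_0_r Rabs_R0; lra.
rewrite big_cons; case: ifP => Pa.
  have := CV_plus _ _ _ _ (H a Pa) IH.
  apply: Un_cv_ext => n; by rewrite big_cons Pa.
apply: Un_cv_ext IH => n; by rewrite big_cons Pa.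
Qed.

Lemma term_le_sum (T : finType) (P : pred T) (f : T -> R) (x : T) :
  P x -> (forall y, P y -> 0 <= f y) -> f x <= \big[Rplus/0]_(y | P y) f y.
Proof.
move=> Px H; rewrite (bigD1 x) //=.
have : 0 <= \big[Rplus/0]_(y | P y && (y != x)) f y.
  apply: sum_ge0 => y /andP[]; auto.
lra.
Qed.

Lemma fin_unif (T : finType) (Q : T -> R -> Prop) :
  (forall x, exists M, Q x M) -> (forall x M M', Q x M -> M <= M' -> Q x M') ->
  exists M, forall x, Q x M.
Proof.
move=> H Hm.
suff : forall r : seq T, exists M, forall x, x \in r -> Q x M.
  move/(_ (index_enum T)) => [M HM]; exists M => x; apply: HM; by rewrite mem_index_enum.
elim => [|a r [M HM]]; first by exists 0.
have [Ma HMa] := H a; exists (Rmax M Ma) => x; rewrite in_cons => /orP[/eqP->|xr].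
  apply: Hm HMa _; apply: Rmax_r.
apply: Hm (HM x xr) _; apply: Rmax_l.
Qed.

Lemma cvdiv (s : nat -> R) l z : Un_cv s l -> 0 <= l ->
  Un_cv (fun n => z / (1 + s n)) (z / (1 + l)).
Proof. intros H Hl.
apply (continuity_seq (fun x => z / (1 + x))); auto.
apply continuity_pt_div. apply continuity_pt_const. intros a b; reflexivity.
apply continuity_pt_plus. apply continuity_pt_const. intros a b; reflexivity.
apply derivable_continuous_pt, derivable_pt_id. lra.
Qed.

Lemma cv_shift (s : nat -> R) l : Un_cv s l -> Un_cv (fun n => s (S n)) l.
Proof. move=> H e He; have [N HN] := H e He; exists N => n Hn; apply: HN; lia. Qed.

Lemma cv_ge0 (s : nat -> R) l : Un_cv s l -> (forall n, 0 <= s n) -> 0 <= l.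
Proof.
move=> H Hs; apply: (@Rle_cv_lim (fun _ => 0) s 0 l) => //.
move=> e He; exists 0%nat => n _; rewrite /R_dist Rminus_eq_0 Rabs_R0; lra.
Qed.

Lemma div_le a b c d : 0 < b -> 0 < d -> a * d <= c * b -> a / b <= c / d.
Proof.
move=> Hb Hd H; rewrite /Rdiv; apply: (Rmult_le_reg_r (b * d)); first nra.
replace (a * / b * (b * d)) with (a * d) by (field; lra).
replace (c * / d * (b * d)) with (c * b) by (field; lra). done.
Qed.

Lemma labp_mono (T : finType) (adj : rel T) z1 z2 : 0 < z1 -> z1 <= z2 ->
  forall t u v, 0 <= labp adj z1 t u v /\ labp adj z1 t u v <= labp adj z2 t u v /\
    labp adj z2 t u v * z1 <= labp adj z1 t u v * z2.
Proof.
move=> H1 H12; elim => [|t IH] u v /=; first lra.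
set s1 := \big[Rplus/0]_(w | _) labp adj z1 t w u.
set s2 := \big[Rplus/0]_(w | _) labp adj z2 t w u.
have s1p : 0 <= s1 by apply: sum_ge0 => w _; case: (IH w u).
have s12 : s1 <= s2 by apply: sum_le => w _; by case: (IH w u) => _ [] ? _.
have s21 : s2 * z1 <= s1 * z2.
  rewrite /s1 /s2 -!sum_mulr; apply: sum_le => w _; by case: (IH w u) => _ [] _ ?.
split; first by rewrite /Rdiv; apply: Rmult_le_pos; [lra | left; apply: Rinv_0_lt_compat; lra].
split; first by apply: div_le; nra.
replace (z2 / (1 + s2) * z1) with ((z2 * z1) / (1 + s2)) by (field; lra).
replace (z1 / (1 + s1) * z2) with ((z1 * z2) / (1 + s1)) by (field; lra).
apply: div_le; try lra; have h0 : 0 <= z1 * z2 by nra. have := Rmult_le_compat_l _ _ _ h0 s12; lra.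
Qed.
Set Implicit Arguments.
Unset Strict Implicit.
Open Scope R_scope.

Definition ev (P : R -> Prop) := exists z0, forall z, z0 <= z -> P z.

Lemma ev_and P Q : ev P -> ev Q -> ev (fun z => P z /\ Q z).
Proof.
move=> [a Ha] [b Hb]; exists (Rmax a b) => z Hz; split.
  apply: Ha; have := Rmax_l a b; lra.
apply: Hb; have := Rmax_r a b; lra.
Qed.

Lemma ev_ge c : ev (fun z => c <= z).
Proof. by exists c. Qed.

Lemma ev_mono P Q : ev P -> (forall z, P z -> Q z) -> ev Q.
Proof. move=> [a Ha] H; exists a => z Hz; auto. Qed.

Lemma ev_fin (T : finType) (P : T -> R -> Prop) :
  (forall x, ev (P x)) -> ev (fun z => forall x, P x z).
Proof.
move=> H.
have [M HM] := @fin_unif T (fun x M => forall z, M <= z -> P x z) H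
  (fun x M M' HM HMM' z Hz => HM z (Rle_trans _ _ _ HMM' Hz)).
exists M => z Hz x; exact: HM.
Qed.

Section Main.
Variables (T : finType) (adj : rel T) (inU : pred T).
Hypothesis Hsym : symmetric adj.
Hypothesis Hbip : forall x y : T, adj x y -> inU x != inU y.
Variable Y : R -> T -> T -> R.
Hypothesis HY : forall z : R, (0 < z)%R -> forall u v : T, adj u v ->
          Un_cv (fun t => labp adj z t u v) (Y z u v).
Variable I : T -> T -> bool.
Hypothesis HI : forall u v : T, adj u v ->
          (I u v = true <-> tends_to_infty (fun z => Y z u v)).

Definition Sx z u v := \big[Rplus/0]_(w | adj w u && (w != v)) Y z w u.
Definition S z x := \big[Rplus/0]_(v | adj v x) Y z v x.
Definition NN := INR (size (index_enum T)).

Lemma NN_ge0 : 0 <= NN.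
Proof. apply: pos_INR. Qed.

Lemma Y_ge0 z u v : 0 < z -> adj u v -> 0 <= Y z u v.
Proof.
move=> Hz Huv; have := cv_ge0 _ _ (HY Hz Huv). move=> H; apply: H => n.
by case: (labp_mono _ adj _ _ Hz (Rle_refl z) n u v).
Qed.

Lemma Y_mono z1 z2 u v : 0 < z1 -> z1 <= z2 -> adj u v -> Y z1 u v <= Y z2 u v.
Proof.
move=> H1 H12 Huv.
apply: (Rle_cv_lim _ (HY H1 Huv) (HY (Rlt_le_trans _ _ _ H1 H12) Huv)) => n.
by case: (labp_mono _ adj _ _ H1 H12 n u v) => _ [].
Qed.

Lemma Sx_ge0 z u v : 0 < z -> 0 <= Sx z u v.
Proof. move=> Hz; apply: sum_ge0 => w /andP[Hw _]; exact: Y_ge0. Qed.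

Lemma S_ge0 z x : 0 < z -> 0 <= S z x.
Proof. move=> Hz; apply: sum_ge0 => w Hw; exact: Y_ge0. Qed.

Lemma Y_fix z u v : 0 < z -> adj u v -> Y z u v = z / (1 + Sx z u v).
Proof.
move=> Hz Huv.
have H1 := cv_shift _ _ (HY Hz Huv).
have H2 : Un_cv (fun n => labp adj z n.+1 u v) (z / (1 + Sx z u v)).
  apply: cvdiv; last exact: Sx_ge0.
  apply: sum_cv => w /andP[Hw _]; exact: HY.
exact: UL_sequence H1 H2.
Qed.

Lemma Y_fix' z u v : 0 < z -> adj u v -> Y z u v * (1 + Sx z u v) = z.
Proof.
move=> Hz Huv; rewrite (Y_fix Hz Huv); have := Sx_ge0 u v Hz; move=> ?; field; lra.
Qed.

Lemma Y_tends u v : adj u v -> I u v = true -> forall M, ev (fun z => M <= Y z u v).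
Proof. move=> Huv HIuv M; have [H _] := HI Huv; exact: (H HIuv M). Qed.

Lemma Y_bounded u v : adj u v -> I u v = false -> exists M, forall z, 0 < z -> Y z u v <= M.
Proof.
move=> Huv HIuv.
have nt : ~ tends_to_infty (fun z => Y z u v).
  move=> Ht; have [_ H] := HI Huv; by rewrite H in HIuv.
have [M HM] := not_all_ex_not _ _ nt.
exists M => z Hz.
have := not_ex_all_not _ _ HM z => /not_all_ex_not [z' Hz'].
have [Hzz' HY'] := imply_to_and _ _ Hz'.
have := Y_mono Hz Hzz' Huv; have := Rnot_le_lt _ _ HY'; lra.
Qed.

Lemma small v w x : adj v w -> adj x v -> x != w -> I x v = true ->
  forall d, 0 < d -> ev (fun z => Y z v w <= d * z).
Proof.
move=> Hvw Hxv Hxw HIx d Hd.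
eapply ev_mono; first exact: (ev_and (Y_tends Hxv HIx (/ d)) (ev_ge 1)). move=> z [HY1 Hz1] /=.
have Hz : 0 < z by lra.
have HS : Y z x v <= Sx z v w.
  apply: (@term_le_sum T (fun y => adj y v && (y != w)) (fun y => Y z y v) x); first by rewrite Hxv.
  move=> y /andP[Hy _]; exact: Y_ge0.
rewrite (Y_fix Hz Hvw).
have H1 : 1 <= d * Sx z v w.
  have := Rmult_le_compat_l d _ _ (Rlt_le _ _ Hd) (Rle_trans _ _ _ HY1 HS).
  rewrite Rinv_r; lra.
have H0 := Sx_ge0 v w Hz.
replace (d * z) with ((d * z) / 1) by field.
apply: div_le; try lra. nra.
Qed.

Lemma PG_true v w : PG adj I v w = true ->
  forall x, adj x v -> x != w -> I x v = false.
Proof.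
rewrite /PG sum_nat_eq0 => /forallP H x Hxv Hxw.
have := H x; rewrite Hxv Hxw /=; by case: (I x v).
Qed.

Lemma PG_false v w : PG adj I v w = false ->
  exists x, [/\ adj x v, x != w & I x v = true].
Proof.
rewrite /PG sum_nat_eq0 => /negbT; rewrite negb_forall => /existsP[x].
rewrite negb_imply => /andP[/andP[H1 H2]] H3; exists x; split => //; move: H3; by case: (I x v).
Qed.

Lemma large v w : adj v w -> PG adj I v w = true ->
  exists K, 0 <= K /\ forall z, 0 < z -> z / (1 + K) <= Y z v w.
Proof.
move=> Hvw HPG.
have Hb : forall x, exists M, adj x v && (x != w) -> forall z, 0 < z -> Y z x v <= M.
  move=> x; case Hx: (adj x v && (x != w)); last by exists 0.
  move/andP: Hx => [Hxv Hxw].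
  have [M HM] := Y_bounded Hxv (PG_true HPG Hxv Hxw).
  by exists M.
have [M HM] := @fin_unif T (fun x M => adj x v && (x != w) -> forall z, 0 < z -> Y z x v <= M)
  Hb (fun x M M' H HMM' Hx z Hz => Rle_trans _ _ _ (H Hx z Hz) HMM').
have HK : 0 <= NN * Rmax M 0 by apply: Rmult_le_pos; [exact: NN_ge0 | exact: Rmax_r].
exists (NN * Rmax M 0); split => // z Hz.
rewrite (Y_fix Hz Hvw).
have HS : Sx z v w <= NN * Rmax M 0.
  apply: sum_bound; last exact: Rmax_r.
  move=> x Hx; apply: Rle_trans (HM x Hx z Hz) _; exact: Rmax_l.
have := Sx_ge0 v w Hz; move=> H0.
apply: div_le; nra.
Qed.

Lemma sum_bool_gt0 (P : pred T) (b : pred T) :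
  (0 < \sum_(v | P v) (b v : nat))%nat = [exists v, P v && b v].
Proof.
rewrite lt0n sum_nat_eq0 negb_forall; apply: eq_existsb => v.
by case: (P v); case: (b v).
Qed.

Lemma sum_bool_card (P : pred T) (b : pred T) :
  (\sum_(v | P v) (b v : nat) = #|[pred v | P v && b v]|)%nat.
Proof.
rewrite -sum1_card [RHS]big_mkcond [LHS]big_mkcond; apply: eq_bigr => v _ /=.
by rewrite !inE; case: (P v); case: (b v).
Qed.

Definition V := Vset adj inU I.

Lemma inV_U x : inU x -> (x \in V) = [exists v, adj v x && I v x].
Proof. move=> Hx; by rewrite inE Hx sum_bool_gt0. Qed.

Lemma inV_W x : ~~ inU x -> x \in V ->
  exists v1 v2, [/\ v1 != v2, adj v1 x, PG adj I v1 x, adj v2 x & PG adj I v2 x].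
Proof.
move=> Hx; rewrite inE (negbTE Hx) sum_bool_card => /card_gt1P [v1 [v2 [H1 H2 H3]]].
move: H1 H2; rewrite !inE => /andP[? ?] /andP[? ?]; by exists v1, v2.
Qed.

Lemma inV_W' x v1 v2 : ~~ inU x -> v1 != v2 -> adj v1 x -> PG adj I v1 x -> adj v2 x -> PG adj I v2 x ->
  x \in V.
Proof.
move=> Hx H12 H1 P1 H2 P2; rewrite inE (negbTE Hx) sum_bool_card.
apply/card_gt1P; exists v1, v2; by rewrite !inE H1 P1 H2 P2.
Qed.

Lemma notin_VU u : inU u -> u \notin V -> forall v, adj v u -> I v u = false.
Proof.
move=> Hu; rewrite (inV_U Hu) negb_exists => /forallP H v Hvu.
by have := H v; rewrite Hvu /= => /negbTE.
Qed.

Lemma cover_UW u w : inU u -> adj u w -> u \notin V -> w \in V.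
Proof.
move=> Hu Huw HuV.
have Hw : ~~ inU w by have := Hbip Huw; rewrite Hu; case: (inU w).
have HnI := notin_VU Hu HuV.
have Hwu : adj w u by rewrite Hsym.
have PGu : PG adj I u w = true.
  rewrite /PG sum_nat_eq0; apply/forallP => x; apply/implyP => /andP[Hxu _].
  by rewrite HnI.
case: (classic (exists v2, [/\ v2 != u, adj v2 w & PG adj I v2 w])) => [[v2 [H1 H2 H3]] | Hno].
  apply: (inV_W' (v1 := u) (v2 := v2)) => //; by rewrite eq_sym.
exfalso.
have [M HM] := Y_bounded Hwu (HnI w Hwu).
set M' := Rmax M 1.
have HM1 : 1 <= M' by apply: Rmax_r.
have HMM : M <= M' by apply: Rmax_l.
have HN := NN_ge0.
set d := / (2 * (NN + 1) * M').
have Hd : 0 < d by apply: Rinv_0_lt_compat; nra.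
have Hev : forall v, ev (fun z => adj v w && (v != u) -> Y z v w <= d * z).
  move=> v; case Hv: (adj v w && (v != u)); last by exists 0.
  move/andP: Hv => [Hvw Hvu].
  case HP: (PG adj I v w).
    by exfalso; apply: Hno; exists v.
  have [x [Hxv Hxw HIx]] := PG_false HP.
  eapply ev_mono; first exact: (small Hvw Hxv Hxw HIx Hd). move=> z H _; exact: H.
have [z0 Hz0] := ev_and (ev_fin Hev) (ev_ge (2 * M' + 1)).
have [Hall Hzbig] := Hz0 (Rmax z0 0) (Rmax_l _ _).
set z := Rmax z0 0 in Hall Hzbig.
have Hz : 0 < z by lra.
have Hfix := Y_fix' Hz Hwu.
have HS : Sx z w u <= NN * (d * z).
  apply: sum_bound; last nra.
  move=> v Hv; exact: Hall.
have HS0 := Sx_ge0 w u Hz.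
have HY0 := Y_ge0 Hz Hwu.
have HYM : Y z w u <= M' by have := HM z Hz; lra.
have Hk : M' * (NN * d) <= / 2.
  have -> : M' * (NN * d) = NN / (2 * (NN + 1)) by rewrite /d; field; lra.
  replace (/ 2) with (1 / 2) by field.
  apply: div_le; lra.
have H1 : Y z w u * (1 + Sx z w u) <= M' * (1 + Sx z w u) by apply: Rmult_le_compat_r; lra.
have H2 : M' * Sx z w u <= M' * (NN * (d * z)) by apply: Rmult_le_compat_l; lra.
have H3 : M' * (NN * (d * z)) = (M' * (NN * d)) * z by ring.
have H4 : (M' * (NN * d)) * z <= / 2 * z by apply: Rmult_le_compat_r; lra.
lra.
Qed.

Lemma V_cover : vertex_cover adj V.
Proof.
move=> x y Hxy.
case Hx: (inU x).
  case HxV: (x \in V) => //=.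
  apply: (cover_UW Hx Hxy); by rewrite HxV.
have Hy : inU y by have := Hbip Hxy; rewrite Hx; case: (inU y).
have Hyx : adj y x by rewrite Hsym.
case HyV: (y \in V); first by rewrite orbT.
rewrite (cover_UW Hy Hyx) //; by rewrite HyV.
Qed.

Lemma estU x eps : inU x -> x \in V -> 0 < eps ->
  ev (fun z => 1 - eps <= S z x / (1 + S z x)).
Proof.
move=> Hx HxV He.
move: HxV; rewrite (inV_U Hx) => /existsP[v /andP[Hvx HIv]].
eapply ev_mono; first exact: (ev_and (Y_tends Hvx HIv (/ eps)) (ev_ge 1)). move=> z [H1 Hz1] /=.
have Hz : 0 < z by lra.
have HS : Y z v x <= S z x.
  apply: (@term_le_sum T (fun y => adj y x) (fun y => Y z y x) v) => // y Hy.
  exact: Y_ge0.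
have HS0 := S_ge0 x Hz.
have He1 : 1 <= eps * S z x.
  have := Rmult_le_compat_l eps _ _ (Rlt_le _ _ He) (Rle_trans _ _ _ H1 HS).
  rewrite Rinv_r; lra.
replace (1 - eps) with ((1 - eps) / 1) by field.
apply: div_le; nra.
Qed.

Lemma notI w y v K : adj w y -> adj v w -> v != y -> 0 <= K ->
  (forall z, 0 < z -> z / (1 + K) <= Y z v w) -> I w y = false.
Proof.
move=> Hwy Hvw Hvy HK HL.
case HI': (I w y) => //; exfalso.
have [z0 Hz0] := ev_and (Y_tends Hwy HI' (2 + K)) (ev_ge 1).
have [H1 Hz1] := Hz0 (Rmax z0 0) (Rmax_l _ _).
set z := Rmax z0 0 in H1 Hz1.
have Hz : 0 < z by lra.
have HS : Y z v w <= Sx z w y.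
  apply: (@term_le_sum T (fun x => adj x w && (x != y)) (fun x => Y z x w) v).
    by rewrite Hvw Hvy.
  move=> x /andP[Hx _]; exact: Y_ge0.
have HL' := HL z Hz.
have H0 := Sx_ge0 w y Hz.
have HYw : Y z w y <= 1 + K.
  rewrite (Y_fix Hz Hwy).
  replace (1 + K) with ((1 + K) / 1) by field.
  apply: div_le; try lra.
  have : z <= (1 + K) * Sx z w y.
    have := Rmult_le_compat_l (1 + K) _ _ (ltac:(lra) : 0 <= 1 + K) (Rle_trans _ _ _ HL' HS).
    replace ((1 + K) * (z / (1 + K))) with z by (field; lra). done.
  lra.
lra.
Qed.

Lemma estW w eps : ~~ inU w -> w \in V -> 0 < eps ->
  ev (fun z => 1 - eps <=
     (\big[Rplus/0]_(y | adj y w && (y \notin V)) Y z y w) / (1 + S z w)).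
Proof.
move=> Hw HwV He.
have [v1 [v2 [H12 Hv1 P1 Hv2 P2]]] := inV_W Hw HwV.
have [K1 [HK1 HL1]] := large Hv1 P1.
have [K2 [HK2 HL2]] := large Hv2 P2.
set K := Rmax K1 K2.
have HK : 0 <= K by apply: Rle_trans HK1 (Rmax_l _ _).
have HL : forall v, (v = v1 \/ v = v2) -> forall z, 0 < z -> z / (1 + K) <= Y z v w.
  move=> v [->|->] z Hz.
    apply: Rle_trans (HL1 z Hz); apply: div_le; try lra.
    have := Rmax_l K1 K2; rewrite -/K; nra.
  apply: Rle_trans (HL2 z Hz); apply: div_le; try lra.
  have := Rmax_r K1 K2; rewrite -/K; nra.
have HN := NN_ge0.
set d := eps / (2 * (NN + 1) * (1 + K)).
have Hd : 0 < d.
  rewrite /d /Rdiv; apply: Rmult_lt_0_compat => //; apply: Rinv_0_lt_compat; nra.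
have Hev : forall y, ev (fun z => adj y w && (y \in V) -> Y z y w <= d * z).
  move=> y; case Hy: (adj y w && (y \in V)); last by exists 0.
  move/andP: Hy => [Hyw HyV].
  have HyU : inU y by have := Hbip Hyw; case: (inU y); case: (inU w) Hw.
  move: HyV; rewrite (inV_U HyU) => /existsP[x /andP[Hxy HIx]].
  have Hxw : x != w.
    apply/negP => /eqP Exw; subst x.
    have Hwy : adj w y by rewrite Hsym.
    case E1: (v1 == y).
      have Hv2y : v2 != y by move/eqP: E1 => <-; rewrite eq_sym.
      by rewrite (notI Hwy Hv2 Hv2y HK (HL v2 (or_intror erefl))) in HIx.
    have Hv1y : v1 != y by rewrite E1.
    by rewrite (notI Hwy Hv1 Hv1y HK (HL v1 (or_introl erefl))) in HIx.
  eapply ev_mono; first exact: (small Hyw Hxy Hxw HIx Hd). move=> z H _; exact: H.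
have [z0 Hz0] := ev_and (ev_fin Hev) (ev_and (ev_ge (2 * (1 + K) / eps)) (ev_ge 1)).
exists z0 => z Hzz0.
have [Hall [Hzb Hz1]] := Hz0 z Hzz0.
have Hz : 0 < z by lra.
set Sin := \big[Rplus/0]_(y | adj y w && (y \in V)) Y z y w.
set Snot := \big[Rplus/0]_(y | adj y w && (y \notin V)) Y z y w.
have HSsplit : S z w = Sin + Snot by rewrite /S (bigID (fun y => y \in V)).
have HSin : Sin <= NN * (d * z).
  apply: sum_bound; last nra.
  move=> y Hy; exact: Hall.
have HSin0 : 0 <= Sin by apply: sum_ge0 => y /andP[Hy _]; exact: Y_ge0.
have HSnot0 : 0 <= Snot by apply: sum_ge0 => y /andP[Hy _]; exact: Y_ge0.
have HSv1 : Y z v1 w <= S z w.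
  apply: (@term_le_sum T (fun y => adj y w) (fun y => Y z y w) v1) => // y Hy.
  exact: Y_ge0.
have Hq := HL v1 (or_introl erefl) z Hz.
set q := z / (1 + K) in Hq.
have Hqz : q * (1 + K) = z by rewrite /q; field; lra.
have Heq : 2 <= eps * q.
  have : 2 * (1 + K) <= eps * z.
    have := Rmult_le_compat_l eps _ _ (Rlt_le _ _ He) Hzb.
    replace (eps * (2 * (1 + K) / eps)) with (2 * (1 + K)) by (field; lra). done.
  rewrite -Hqz => H; nra.
have Hdz : NN * (d * z) <= eps * q / 2.
  have -> : NN * (d * z) = (NN / (NN + 1)) * (eps * q / 2).
    rewrite /d -Hqz; field; lra.
  have : NN / (NN + 1) <= 1.
    replace 1 with (1 / 1) at 2 by field. apply: div_le; lra.
  move=> H; have : 0 <= eps * q / 2 by lra. nra.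
have HSeq : eps * q <= eps * S z w by apply: Rmult_le_compat_l; lra.
replace (1 - eps) with ((1 - eps) / 1) by field.
apply: div_le; try lra.
Qed.

Definition p z x y := Y z y x / (1 + S z x).
Definition A z x y := if inU x && adj y x then p z x y else 0.

Lemma p_ge0 z x y : 0 < z -> adj y x -> 0 <= p z x y.
Proof.
move=> Hz Hyx; rewrite /p /Rdiv; apply: Rmult_le_pos; first exact: Y_ge0.
have := S_ge0 x Hz; move=> ?; left; apply: Rinv_0_lt_compat; lra.
Qed.

Lemma A_ge0 z x y : 0 < z -> 0 <= A z x y.
Proof. move=> Hz; rewrite /A; case: ifP => [/andP[_ H]|_]; [exact: p_ge0 | lra]. Qed.

Lemma S_split z x y : adj y x -> S z x = Y z y x + Sx z x y.
Proof. move=> Hyx; by rewrite /S (bigD1 y). Qed.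

Lemma p_sym z x y : 0 < z -> adj x y -> p z x y = p z y x.
Proof.
move=> Hz Hxy.
have Hyx : adj y x by rewrite Hsym.
rewrite /p (S_split z Hyx) (S_split z Hxy) (Y_fix Hz Hxy) (Y_fix Hz Hyx).
have := Sx_ge0 x y Hz; have := Sx_ge0 y x Hz.
set a := Sx z x y; set b := Sx z y x => Hb Ha.
have E1 : z / (1 + b) / (1 + (z / (1 + b) + a)) = z / ((1 + a) * (1 + b) + z).
  field; split; try lra; nra.
have E2 : z / (1 + a) / (1 + (z / (1 + a) + b)) = z / ((1 + a) * (1 + b) + z).
  field; split; try lra; nra.
by rewrite E1 E2.
Qed.

Lemma row z x : \big[Rplus/0]_(y | adj y x) p z x y = S z x / (1 + S z x).
Proof. by rewrite /p /Rdiv sum_mulr. Qed.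

Lemma row_le1 z x : 0 < z -> S z x / (1 + S z x) <= 1.
Proof.
move=> Hz; have := S_ge0 x Hz => H.
replace 1 with (1 / 1) at 2 by field. apply: div_le; lra.
Qed.

Lemma rowcol z x : 0 < z ->
  \big[Rplus/0]_y A z x y + \big[Rplus/0]_y A z y x <= 1.
Proof.
move=> Hz; case Hx: (inU x).
  have -> : \big[Rplus/0]_y A z y x = 0.
    apply: big1 => y _; rewrite /A; case: ifP => // /andP[Hy Hxy].
    by have := Hbip Hxy; rewrite Hx Hy.
  have -> : \big[Rplus/0]_y A z x y = \big[Rplus/0]_(y | adj y x) p z x y.
    by rewrite [RHS]big_mkcond; apply: eq_bigr => y _; rewrite /A Hx.
  rewrite row; have := row_le1 x Hz; lra.
have -> : \big[Rplus/0]_y A z x y = 0.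
  by apply: big1 => y _; rewrite /A Hx.
have -> : \big[Rplus/0]_y A z y x = \big[Rplus/0]_(y | adj y x) p z x y.
  rewrite [RHS]big_mkcond; apply: eq_bigr => y _; rewrite /A.
  case Hyx: (adj y x).
    have Hxy : adj x y by rewrite Hsym.
    have Hy : inU y by have := Hbip Hxy; rewrite Hx; case: (inU y).
    by rewrite Hy Hxy /= (p_sym Hz Hyx).
  have Hxy : adj x y = false by rewrite Hsym.
  by rewrite Hxy andbF.
rewrite row; have := row_le1 x Hz; lra.
Qed.

Lemma card_sum (C : {set T}) c :
  \big[Rplus/0]_x (if x \in C then c else 0) = INR #|C| * c.
Proof.
rewrite -sum1_card (big_morph INR plus_INR (erefl (INR 0))) -sum_mulr.
rewrite [RHS]big_mkcond; apply: eq_bigr => x _; case: ifP => _ /=; ring.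
Qed.

Lemma sum_if (C : {set T}) (f : T -> T -> R) :
  \big[Rplus/0]_x \big[Rplus/0]_y (if x \in C then f x y else 0) =
  \big[Rplus/0]_x (if x \in C then \big[Rplus/0]_y f x y else 0).
Proof.
apply: eq_bigr => x _; case: ifP => // _; by rewrite big1.
Qed.

Lemma sum_if2 (C : {set T}) (f g : T -> R) :
  \big[Rplus/0]_x (if x \in C then f x else 0) + \big[Rplus/0]_x (if x \in C then g x else 0) =
  \big[Rplus/0]_x (if x \in C then f x + g x else 0).
Proof.
rewrite -big_split; apply: eq_bigr => x _; case: ifP => _; [reflexivity | exact: Rplus_0_r].
Qed.

Lemma upper z (C : {set T}) : 0 < z -> vertex_cover adj C ->
  \big[Rplus/0]_x \big[Rplus/0]_y A z x y <= INR #|C|.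
Proof.
move=> Hz HC.
apply: (Rle_trans _ (\big[Rplus/0]_x \big[Rplus/0]_y
   ((if x \in C then A z x y else 0) + (if y \in C then A z x y else 0)))).
  apply: sum_le => x _; apply: sum_le => y _.
  have H0 := A_ge0 x y Hz.
  rewrite /A in H0 *; case: ifP H0 => [/andP[_ Hyx]|_] H0; last by case: ifP; case: ifP; lra.
  have := HC y x Hyx; case: (x \in C); case: (y \in C) => //= _; lra.
rewrite (eq_bigr (fun x => \big[Rplus/0]_y (if x \in C then A z x y else 0) +
                         \big[Rplus/0]_y (if y \in C then A z x y else 0))); last first.
  by move=> x _; rewrite big_split.
rewrite big_split /= sum_if exchange_big /= sum_if sum_if2.
rewrite -[INR #|C|]Rmult_1_r -card_sum.
apply: sum_le => x _; case: ifP => _; last lra.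
exact: rowcol.
Qed.

Lemma lower z (D : {set T}) eps : 0 < z ->
  (forall x, x \in D -> inU x -> 1 - eps <= S z x / (1 + S z x)) ->
  (forall x, x \in D -> ~~ inU x ->
     1 - eps <= (\big[Rplus/0]_(y | adj y x && (y \notin D)) Y z y x) / (1 + S z x)) ->
  INR #|D| * (1 - eps) <= \big[Rplus/0]_x \big[Rplus/0]_y A z x y.
Proof.
move=> Hz HU HW.
apply: (Rle_trans _ (\big[Rplus/0]_x \big[Rplus/0]_y
   ((if x \in D then A z x y else 0) + (if y \in D then (if x \in D then 0 else A z x y) else 0))));
  last first.
  apply: sum_le => x _; apply: sum_le => y _.
  have H0 := A_ge0 x y Hz.
  case: (x \in D); case: (y \in D); lra.
rewrite (eq_bigr (fun x => \big[Rplus/0]_y (if x \in D then A z x y else 0) +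
                         \big[Rplus/0]_y (if y \in D then (if x \in D then 0 else A z x y) else 0)));
  last by move=> x _; rewrite big_split.
rewrite big_split /= sum_if exchange_big /= sum_if sum_if2 -card_sum.
apply: sum_le => x _; case: ifP => HxD; last lra.
case Hx: (inU x).
  have -> : \big[Rplus/0]_y A z x y = \big[Rplus/0]_(y | adj y x) p z x y.
    by rewrite [RHS]big_mkcond; apply: eq_bigr => y _; rewrite /A Hx.
  have : 0 <= \big[Rplus/0]_y (if y \in D then 0 else A z y x).
    apply: sum_ge0 => y _; case: ifP => _; [lra | exact: A_ge0].
  rewrite row; have := HU x HxD Hx; lra.
have -> : \big[Rplus/0]_y A z x y = 0.
  by apply: big1 => y _; rewrite /A Hx.
have -> : \big[Rplus/0]_y (if y \in D then 0 else A z y x) =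
          \big[Rplus/0]_(y | adj y x && (y \notin D)) p z x y.
  rewrite [RHS]big_mkcond; apply: eq_bigr => y _; rewrite /A.
  case Hyx: (adj y x); case HyD: (y \in D) => //=.
    have Hxy : adj x y by rewrite Hsym.
    have Hy : inU y by have := Hbip Hxy; rewrite Hx; case: (inU y).
    by rewrite Hy Hxy /= (p_sym Hz Hyx).
  have Hxy : adj x y = false by rewrite Hsym.
  by rewrite Hxy andbF.
rewrite /p /Rdiv sum_mulr; have := HW x HxD (negbT Hx); rewrite /Rdiv; lra.
Qed.

Lemma main_min : min_vertex_cover adj V.
Proof.
split; first exact: V_cover.
move=> C HC.
set n := INR #|V|.
have Hn : 0 <= n by apply: pos_INR.
set eps := / (n + 1).
have He : 0 < eps by apply: Rinv_0_lt_compat; lra.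
have Hev : forall x, ev (fun z => x \in V ->
   (inU x -> 1 - eps <= S z x / (1 + S z x)) /\
   (~~ inU x -> 1 - eps <=
      (\big[Rplus/0]_(y | adj y x && (y \notin V)) Y z y x) / (1 + S z x))).
  move=> x; case HxV: (x \in V); last by exists 0.
  case Hx: (inU x).
    eapply ev_mono; first exact: (estU Hx HxV He).
    move=> z H _; split => // _.
  eapply ev_mono; first exact: (estW (negbT Hx) HxV He).
  move=> z H _; split => //.
have [z0 Hz0] := ev_and (ev_fin Hev) (ev_ge 1).
have [Hall Hz1] := Hz0 (Rmax z0 0) (Rmax_l _ _).
set z := Rmax z0 0 in Hall Hz1.
have Hz : 0 < z by lra.
have Hlow := lower Hz (fun x Hx HxU => proj1 (Hall x Hx) HxU)
                      (fun x Hx HxU => proj2 (Hall x Hx) HxU).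
have Hup := upper Hz HC.
have Hlt : n * (1 - eps) > n - 1.
  have -> : n * (1 - eps) = n - n / (n + 1) by rewrite /eps; field; lra.
  have : n / (n + 1) < 1.
    apply: (Rmult_lt_reg_r (n + 1)); first lra.
    replace (n / (n + 1) * (n + 1)) with n by (field; lra). lra.
  lra.
rewrite leqNgt; apply/negP => H.
have : (#|C|.+1 <= #|V|)%coq_nat by apply/leP.
move/le_INR; rewrite S_INR -/n => H'.
rewrite -/n in Hlow; lra.
Qed.
End Main.

Unset Implicit Arguments.
Set Strict Implicit.

Theorem proposition2 (T : finType) (adj : rel T) (inU : pred T)
  (Hsym : symmetric adj)
  (Hbip : forall x y : T, adj x y -> inU x != inU y)
  (Y : R -> T -> T -> R)
  (HY : forall z : R, (0 < z)%R -> forall u v : T, adj u v ->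
          Un_cv (fun t => labp adj z t u v) (Y z u v))
  (I : T -> T -> bool)
  (HI : forall u v : T, adj u v ->
          (I u v = true <-> tends_to_infty (fun z => Y z u v))) :
  min_vertex_cover adj (Vset adj inU I).
Proof.
exact: (main_min Hsym Hbip HY HI).
Qed.
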